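(* Let $V$ be an $n$-dimensional complex vector space, $\Lambda(V\otimes V^* )$ the exterior algebra on $V\otimes V^*$, and $X=(x_{ij})_{1\le i,j\le n}\in\operatorname{Mat}_{n,n}(\Lambda(V\otimes V^* ))$. Then $X^{2n}=0$.
   Context: $e_1,\ldots,e_n$ is a basis of $V$, $e_i^*$ its dual basis, $x_{ij}=e_i\otimes e_j^*$ is the standard basis of $V\otimes V^*$. Products in the exterior algebra are wedge products; matrix products are taken with entries multiplied in the order written. *)

(* Defs.v *)
From mathcomp Require Import all_boot all_order all_algebra.
From mathcomp Require Import complex Rstruct.
Set Implicit Arguments. Unset Strict Implicit. Unset Printing Implicit Defensive.
Import Order.TTheory GRing.Theory Num.Theory.
Local Open Scope ring_scope.

Definition CC : fieldType := Rdefinitions.R[i].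

(* Index set of the standard basis x_ij = e_i (x) e_j^* of V (x) V^* ,
   dim V = n. *)
Definition idx (n : nat) : finType := ('I_n * 'I_n)%type.

(* Exterior algebra Lambda(W) of the free C-module W with basis indexed by
   the finite (totally ordered, via enum_rank) set idx n.  An element is
   its coordinate vector in the standard basis
   { e_S = e_{s_1} /\ ... /\ e_{s_k} : S subset, s_1 < ... < s_k }. *)
Definition ext (n : nat) : Type := {ffun {set idx n} -> CC}.

(* sign of e_S /\ e_T = (-1)^{#{(s,t) in S x T : s > t}} e_{S u T}
   (when S and T are disjoint; otherwise the product is 0). *)
Definition ext_sign n (S T : {set idx n}) : CC :=
  (-1) ^+ #|[set p : idx n * idx n |
               (p.1 \in S) && (p.2 \in T) &&
               (enum_rank p.2 < enum_rank p.1)%N]|.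

Definition ext_mul n (a b : ext n) : ext n :=
  [ffun U : {set idx n} =>
     \sum_(S : {set idx n})
       \sum_(T : {set idx n} | (S :&: T == set0) && (S :|: T == U))
         ext_sign S T * a S * b T].

Definition ext_one n : ext n := [ffun S : {set idx n} => (S == set0)%:R].

Definition ext_gen n (i j : 'I_n) : ext n :=
  [ffun S : {set idx n} => (S == [set (i, j)])%:R].

(* Matrices over Lambda(V (x) V^* ): product with entries multiplied
   in the order written. *)
Definition ext_mxmul n m (A B : 'M[ext n]_m) : 'M[ext n]_m :=
  \matrix_(i < m, j < m) \sum_(k < m) ext_mul (A i k) (B k j).

Definition ext_mx1 n m : 'M[ext n]_m :=
  \matrix_(i < m, j < m) (if i == j then ext_one n else 0).

Definition ext_mxpow n m (A : 'M[ext n]_m) (k : nat) : 'M[ext n]_m :=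
  iter k (ext_mxmul A) (ext_mx1 n m).

Definition Xgen n : 'M[ext n]_n := \matrix_(i < n, j < n) ext_gen i j.

(* Main.v *)
Require Import Defs.
From HB Require Import structures.
From mathcomp Require Import all_boot all_order all_algebra zify ring.
From mathcomp Require Import complex Rstruct.
Set Implicit Arguments. Unset Strict Implicit. Unset Printing Implicit Defensive.
Import Order.TTheory GRing.Theory Num.Theory.
Local Open Scope ring_scope.

Section Newton.
Variable R : comNzRingType.

Lemma deriv_prod_seq (I : eqType) (r : seq I) (F : I -> {poly R}) : uniq r ->
  (\prod_(i <- r) F i)^`() =
  \sum_(j <- r) \prod_(i <- r) (if i == j then (F i)^`() else F i).
Proof.
elim: r => [|a r IH] /=; first by rewrite !big_nil -polyC1 derivC.
case/andP=> anr ur; rewrite big_cons derivM IH //.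
rewrite [in RHS]big_cons [in RHS]big_cons eqxx mulr_sumr; congr (_ * _ + _).
  by apply: eq_big_seq => i ir; case: eqP ir anr => // -> ->.
apply: eq_big_seq => j jr; rewrite big_cons; case: eqP jr anr => [-> -> //|_ _ _] //=.

Qed.

Lemma det_deriv n (M : 'M[{poly R}]_n) :
  (\det M)^`() = \sum_j \det (\matrix_(i, k) if i == j then (M i k)^`() else M i k).
Proof.
rewrite /determinant (@raddf_sum _ _ deriv) /= exchange_big /=; apply: eq_bigr => s _.
rewrite derivM.
have -> : (((-1) ^+ perm.odd_perm s : {poly R}))^`() = 0.
  by case: (perm.odd_perm s); rewrite ?expr1 ?expr0 -?polyC1 ?derivN derivC ?oppr0.
rewrite mul0r add0r deriv_prod_seq ?index_enum_uniq // mulr_sumr; apply: eq_bigr => j _.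
by congr (_ * _); apply: eq_bigr => i _; rewrite mxE.
Qed.

Section Mat.
Variables (m : nat) (A : 'M[R]_m.+1).
Local Notation n := m.+1.
Local Notation p := (char_poly A).
Local Notation C := (map_mx (@polyC R)).
Definition rp i := \poly_(j < n.+1) p`_(i + j).

Lemma sizep : size p = n.+1. Proof. exact: size_char_poly. Qed.
Lemma pbig k : (n < k)%N -> p`_k = 0.
Proof. by move=> h; rewrite nth_default // sizep. Qed.
Lemma pn : p`_n = 1.
Proof. by have /monicP := char_poly_monic A; rewrite lead_coefE sizep. Qed.

Lemma rX i : rp i.+1 * 'X = rp i - (p`_i)%:P.
Proof.
apply/polyP => j; rewrite coefMX coefB coefC !coef_poly.
case: j => [|j] /=; first by rewrite addn0 subrr.
rewrite subr0 addSnnS; case: (ltngtP j n) => hj.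
- have -> : (j < m.+2)%N by lia.
  by have -> : (j.+1 < m.+2)%N by lia.
- have -> : (j < m.+2)%N = false by lia.
  by have -> : (j.+1 < m.+2)%N = false by lia.
- have -> : (j.+1 < m.+2)%N = false by lia.
  rewrite pbig; [by rewrite if_same | lia].
Qed.

Lemma r0 : rp 0 = p.
Proof.
apply/polyP => j; rewrite coef_poly add0n; case: ltnP => // h.
by rewrite pbig.
Qed.

Lemma rn : rp n = 1.
Proof.
apply/polyP => j; rewrite coef_poly coef1; case: j => [|j]; first by rewrite addn0 pn.
by rewrite pbig ?if_same //; lia.
Qed.

Lemma horner_expand : horner_mx A p = A ^+ n + \sum_(i < n) p`_i *: A ^+ i.
Proof.
rewrite -{1}(coefK p) poly_def raddf_sum /= sizep big_ord_recr /= addrC pn scale1r.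
rewrite rmorphXn /= horner_mx_X; congr (_ + _); apply: eq_bigr => i _.
by rewrite horner_mxZ /= rmorphXn /= horner_mx_X.
Qed.

Definition Qm := \sum_(i < n) rp i.+1 *: C (A ^+ i).

Lemma MQ : char_poly_mx A *m Qm = p%:M.
Proof.
rewrite mulmx_sumr.
have E i : char_poly_mx A *m (rp i.+1 *: C (A ^+ i)) =
   (rp i *: C (A ^+ i) - rp i.+1 *: C (A ^+ i.+1)) - (p`_i)%:P *: C (A ^+ i).
  rewrite -scalemxAr /char_poly_mx mulmxBl mul_scalar_mx -map_mxM mulmxE -exprS.
  by rewrite scalerBr scalerA rX scalerBl addrAC.
rewrite (eq_bigr _ (fun (i : 'I_n) _ => E i)) sumrB.
set F := fun i => rp i *: C (A ^+ i).
have tel : \sum_(i < n) (F i - F i.+1) = F 0%N - F n.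
  rewrite -(big_mkord xpredT (fun i => F i - F i.+1)).
  rewrite (eq_bigr (fun i => - (F i.+1 - F i))) ?sumrN ?telescope_sumr ?opprB //.
  by move=> i _; rewrite opprB.
rewrite tel /F r0 rn expr0 map_mx1 scale1r scalemx1 -!addrA -opprD.
rewrite -[RHS]addr0; congr (_ + _); apply/eqP; rewrite oppr_eq0; apply/eqP.
have -> : \sum_(i < n) (p`_i)%:P *: C (A ^+ i) = C (\sum_(i < n) p`_i *: A ^+ i).
  apply/matrixP => a b; rewrite !(mxE, summxE) rmorph_sum; apply: eq_bigr => i _; rewrite !mxE; by rewrite /= polyCM.
by rewrite -raddfD /= -horner_expand Cayley_Hamilton raddf0.
Qed.

Lemma trC (B : 'M[R]_n) : \tr (C B) = (\tr B)%:P.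
Proof. by rewrite /mxtrace rmorph_sum; apply: eq_bigr => i _; rewrite mxE. Qed.

Lemma char_deriv : p^`() = \tr (\adj (char_poly_mx A)).
Proof.
rewrite /char_poly det_deriv /mxtrace; apply: eq_bigr => j _; rewrite mxE.
rewrite (expand_det_row _ j) (bigD1 j) //= big1 ?addr0.
  rewrite !mxE !eq_refl derivB derivMn derivX derivC subr0 /= mulr1n mul1r.
  rewrite /cofactor; congr (_ * \det _); apply/matrixP => a b; rewrite !mxE.
  by rewrite eq_sym (negbTE (neq_lift _ _)).
move=> k nkj; rewrite !mxE eq_refl derivB derivMn derivX derivC subr0 eq_sym.
by rewrite (negbTE nkj) mulr0n mul0r.
Qed.

Lemma trQ (htr : forall k, (0 < k)%N -> \tr (A ^+ k) = 0) :
  \tr Qm = rp 1 * (n%:R)%:P.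
Proof.
rewrite /Qm raddf_sum big_ord_recl /= big1 ?addr0.
  by rewrite mxtraceZ trC expr0 mxtrace1.
by move=> i _; rewrite mxtraceZ trC htr ?mulr0.
Qed.

Lemma tradj : \tr (\adj (char_poly_mx A)) = \tr Qm.
Proof.
apply: (monic_lreg (char_poly_monic A)).
rewrite -!mxtraceZ -mul_mx_scalar -MQ mulmxA mul_adj_mx mul_scalar_mx //.
Qed.

Lemma newton_nil (htr : forall k, (0 < k)%N -> \tr (A ^+ k) = 0)
  (hreg : forall k (c : R), (0 < k)%N -> c *+ k = 0 -> c = 0) : A ^+ n = 0.
Proof.
have D : p^`() = rp 1 * (n%:R)%:P by rewrite char_deriv tradj trQ.
have pz j : (0 < j < n)%N -> p`_j = 0.
  case: j => // j /andP[_ hj]; move: (congr1 (fun q : {poly R} => q`_j) D) => /=.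
  rewrite coef_deriv coefMC coef_poly.
  have -> : (j < n.+1)%N by lia.
  rewrite add1n mulr_natr => e; apply: (hreg (n - j.+1)%N); first by lia.
  apply: (addrI (p`_j.+1 *+ j.+1)); rewrite addr0 -mulrnDr subnKC //; lia.
have pe : p = 'X^n + (p`_0)%:P.
  apply/polyP => j; rewrite coefD coefXn coefC; case: j => [|j] /=.
    by rewrite add0r.
  rewrite addr0; case: (ltngtP j.+1 n) => hj.
  - by rewrite pz //; lia.
  - by rewrite pbig.
  - by rewrite hj pn.
have ch := Cayley_Hamilton A.
rewrite pe rmorphD /= rmorphXn /= horner_mx_X horner_mx_C in ch.
have p0 : p`_0 = 0.
  apply: (hreg n) => //; move: (congr1 mxtrace ch).
  by rewrite mxtraceD htr // mxtrace_scalar add0r raddf0.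
by move: ch; rewrite p0 raddf0 addr0.
Qed.

End Mat.
End Newton.

HB.instance Definition _ n := GRing.Zmodule.on (ext n).

Section Ext.
Variable n : nat.
Local Notation E := (ext n).
Local Notation sT := {set idx n}.
Implicit Types (a b c : E) (R S T U W : sT).

Definition inv S T : nat := #|[set p : idx n * idx n |
               (p.1 \in S) && (p.2 \in T) && (enum_rank p.2 < enum_rank p.1)%N]|.
Lemma signE S T : ext_sign S T = (-1) ^+ inv S T. Proof. by []. Qed.

Definition P S T U : bool := (S :&: T == set0) && (S :|: T == U).

Lemma mulE a b U : ext_mul a b U =
  \sum_S \sum_T (P S T U)%:R * (ext_sign S T * a S * b T).
Proof.
rewrite ffunE; apply: eq_bigr => S _; rewrite big_mkcond; apply: eq_bigr => T _.
by rewrite /P; case: (_ && _); rewrite ?mul1r ?mul0r.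
Qed.

Lemma sum_pred1 (F : sT -> CC) X : \sum_S (S == X)%:R * F S = F X.
Proof.
rewrite (bigD1 X) //= eqxx mul1r big1 ?addr0 // => S /negbTE ->; by rewrite mul0r.
Qed.

Lemma sum_P (G : sT -> CC) T W :
  \sum_S (P T W S)%:R * G S = (T :&: W == set0)%:R * G (T :|: W).
Proof.
rewrite /P; case: (T :&: W == set0) => /=.
  by rewrite mul1r -(sum_pred1 G); apply: eq_bigr => S _; rewrite eq_sym.
by rewrite mul0r big1 // => S _; rewrite mul0r.
Qed.

Lemma inv_set0 (A : {set idx n * idx n}) : A = set0 -> #|A| = 0%N.
Proof. by move->; rewrite cards0. Qed.

Lemma invUl R T W : R :&: T == set0 -> inv (R :|: T) W = (inv R W + inv T W)%N.
Proof.
move=> /eqP dRT; rewrite /inv -cardsUI.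
rewrite [in RHS](_ : _ :&: _ = set0) ?cards0 ?addn0.
  by apply: eq_card => p; rewrite !inE -!andb_orl.
apply/setP => p; rewrite !inE.
move/setP: dRT => /(_ p.1); rewrite !inE => h.
by case: (p.1 \in R) h; case: (p.1 \in T) => //= _; rewrite andbF.
Qed.

Lemma invUr R T W : T :&: W == set0 -> inv R (T :|: W) = (inv R T + inv R W)%N.
Proof.
move=> /eqP dTW; rewrite /inv -cardsUI.
rewrite [in RHS](_ : _ :&: _ = set0) ?cards0 ?addn0.
  by apply: eq_card => p; rewrite !inE; case: (p.1 \in R); case: (p.2 \in T);
     case: (p.2 \in W); case: (enum_rank _ < _)%N.
apply/setP => p; rewrite !inE.
move/setP: dTW => /(_ p.2); rewrite !inE => h.
by case: (p.2 \in T) h; case: (p.2 \in W) => //= _; rewrite !andbF.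
Qed.


Lemma mulr_sum2 (x : CC) (F : sT -> sT -> CC) :
  x * \sum_i \sum_j F i j = \sum_i \sum_j x * F i j.
Proof. by rewrite mulr_sumr; apply: eq_bigr => i _; rewrite mulr_sumr. Qed.

Lemma sum2_mull (x : CC) (F : sT -> sT -> CC) :
  (\sum_i \sum_j F i j) * x = \sum_i \sum_j F i j * x.
Proof. by rewrite mulr_suml; apply: eq_bigr => i _; rewrite mulr_suml. Qed.

Lemma assoc_l a b c U : ext_mul a (ext_mul b c) U =
  \sum_R \sum_T \sum_W ((T :&: W == set0) && P R (T :|: W) U)%:R *
     (ext_sign R (T :|: W) * ext_sign T W * a R * b T * c W).
Proof.
rewrite mulE; apply: eq_bigr => R _.
under eq_bigr => S _ do rewrite mulE mulrA mulr_sum2.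
rewrite exchange_big; apply: eq_bigr => T _; rewrite exchange_big; apply: eq_bigr => W _.
under eq_bigr => S _ do [rewrite (_ : _ * _ = (P T W S)%:R * ((P R S U)%:R *
   (ext_sign R S * ext_sign T W * a R * b T * c W))); last by ring].
by rewrite sum_P; case: (T :&: W == set0); rewrite /= ?mul1r ?mul0r //.
Qed.

Lemma assoc_r a b c U : ext_mul (ext_mul a b) c U =
  \sum_R \sum_T \sum_W ((R :&: T == set0) && P (R :|: T) W U)%:R *
     (ext_sign (R :|: T) W * ext_sign R T * a R * b T * c W).
Proof.
rewrite mulE.
under eq_bigr => S _ do under eq_bigr => W _ do rewrite mulE mulr_sum2 sum2_mull mulr_sum2.
under eq_bigr => S _ do [rewrite exchange_big; under eq_bigr => i _ do rewrite exchange_big].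
rewrite exchange_big; apply: eq_bigr => R _; rewrite exchange_big; apply: eq_bigr => T _.
rewrite exchange_big; apply: eq_bigr => W _.
under eq_bigr => S _ do [rewrite (_ : _ * _ = (P R T S)%:R * ((P S W U)%:R *
   (ext_sign S W * ext_sign R T * a R * b T * c W))); last by ring].
by rewrite sum_P; case: (R :&: T == set0); rewrite /= ?mul1r ?mul0r.
Qed.

Lemma mulA : associative (@ext_mul n).
Proof.
move=> a b c; apply/ffunP => U; rewrite assoc_l assoc_r.
apply: eq_bigr => R _; apply: eq_bigr => T _; apply: eq_bigr => W _.
have ce : ((T :&: W == set0) && P R (T :|: W) U) =
          ((R :&: T == set0) && P (R :|: T) W U).
  rewrite /P setIUr setIUl !setU_eq0 setUA.
  by case: (R :&: T == set0); case: (R :&: W == set0); case: (T :&: W == set0).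
rewrite ce; case hc: (_ && _); last by rewrite !mul0r.
move: hc; rewrite /P setIUl setU_eq0 => /andP[h1 /andP[/andP[h2 h3] _]].
by rewrite !signE invUl // invUr // !exprD; congr (_ * _); ring.
Qed.

Lemma inv0l T : inv set0 T = 0%N.
Proof. by apply/eqP; rewrite cards_eq0; apply/eqP/setP => p; rewrite !inE. Qed.
Lemma inv0r T : inv T set0 = 0%N.
Proof. by apply/eqP; rewrite cards_eq0; apply/eqP/setP => p; rewrite !inE andbF. Qed.

Lemma mul1 : left_id (ext_one n) (@ext_mul n).
Proof.
move=> a; apply/ffunP => U; rewrite mulE (bigD1 set0) //= [X in _ + X]big1 ?addr0.
  under eq_bigr => T _ do rewrite /P set0I set0U eqxx /= signE inv0l ffunE eqxx /= mul1r mul1r.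
  exact: (sum_pred1 a U).
move=> S /negbTE nS; rewrite big1 // => T _; rewrite ffunE nS /=.
by rewrite mulr0 mul0r mulr0.
Qed.

Lemma mul1r' : right_id (ext_one n) (@ext_mul n).
Proof.
move=> a; apply/ffunP => U; rewrite mulE exchange_big (bigD1 set0) //= [X in _ + X]big1 ?addr0.
  under eq_bigr => T _ do rewrite /P setI0 setU0 eqxx /= signE inv0r ffunE eqxx /= mulr1 mul1r.
  exact: (sum_pred1 a U).
move=> S /negbTE nS; rewrite big1 // => T _; rewrite ffunE nS /=.
by rewrite mulr0 mulr0.
Qed.

Lemma mulDl : left_distributive (@ext_mul n) +%R.
Proof.
move=> a b c; apply/ffunP => U; rewrite [RHS]ffunE !mulE -big_split; apply: eq_bigr => S _.
rewrite -big_split; apply: eq_bigr => T _; rewrite ffunE /=; ring.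
Qed.

Lemma mulDr : right_distributive (@ext_mul n) +%R.
Proof.
move=> a b c; apply/ffunP => U; rewrite [RHS]ffunE !mulE -big_split; apply: eq_bigr => S _.
rewrite -big_split; apply: eq_bigr => T _; rewrite ffunE /=; ring.
Qed.

Lemma one_neq0 : ext_one n != 0.
Proof.
apply/negP => /eqP/ffunP/(_ set0); rewrite !ffunE eqxx => /eqP.
by rewrite oner_eq0.
Qed.
End Ext.

HB.instance Definition _ n := GRing.Zmodule_isNzRing.Build (ext n)
  (@mulA n) (@mul1 n) (@mul1r' n) (@mulDl n) (@mulDr n) (@one_neq0 n).


Section Grade.
Variable n : nat.
Local Notation E := (ext n).
Local Notation sT := {set idx n}.
Implicit Types (a b c : E) (R S T U W : sT).

Lemma mulrE a b U : (a * b) U = ext_mul a b U. Proof. by []. Qed.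

Lemma inv_sym S T : S :&: T == set0 -> (inv S T + inv T S)%N = (#|S| * #|T|)%N.
Proof.
move=> /eqP dST.
pose sw := fun p : idx n * idx n => (p.2, p.1).
have swi : injective sw by move=> [x y] [x' y'] [-> ->].
have -> : inv T S = #|[set p : idx n * idx n | (p.1 \in S) && (p.2 \in T) &&
               (enum_rank p.1 < enum_rank p.2)%N]|.
  rewrite /inv -(card_preimset _ swi); apply: eq_card => p; rewrite !inE /=.
  by case: (p.1 \in S); case: (p.2 \in T).
rewrite -cardsUI [X in (_ + X)%N](_ : _ = 0%N) ?addn0.
  rewrite -cardsX; apply: eq_card => p; rewrite !inE.
  case: (boolP (p.1 \in S)) => h1; case: (boolP (p.2 \in T)) => h2 //=.
  case: ltngtP => // /val_inj/enum_rank_inj e.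
  by move/setP: dST => /(_ p.1); rewrite !inE h1 /= -e h2.
apply/eqP; rewrite cards_eq0; apply/eqP/setP => p; rewrite !inE.
case: (p.1 \in S); case: (p.2 \in T) => //=.
by case: ltngtP.
Qed.

Lemma sign_sym S T : S :&: T == set0 ->
  ext_sign S T * ext_sign T S = (-1) ^+ (odd #|S| && odd #|T|).
Proof. by move=> h; rewrite !signE -exprD inv_sym // -oddM signr_odd. Qed.

Definition hom (p : bool) a := forall S, odd #|S| != p -> a S = 0.

Lemma hom0 p : hom p 0. Proof. by move=> S _; rewrite ffunE. Qed.
Lemma homD p a b : hom p a -> hom p b -> hom p (a + b).
Proof. by move=> ha hb S hS; rewrite ffunE ha // hb // addr0. Qed.
Lemma homN p a : hom p a -> hom p (- a).
Proof. by move=> ha S hS; rewrite ffunE ha // oppr0. Qed.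
Lemma hom_sum p (I : finType) (F : I -> E) : (forall i, hom p (F i)) -> hom p (\sum_i F i).
Proof. by move=> h; elim/big_ind: _ => //; [exact: hom0 | exact: homD]. Qed.

Lemma P_card S T U : P S T U -> #|U| = (#|S| + #|T|)%N.
Proof.
by case/andP => /eqP h /eqP <-; rewrite cardsU h cards0 subn0.
Qed.

Lemma hom_mul p q a b : hom p a -> hom q b -> hom (p (+) q) (a * b).
Proof.
move=> ha hb U hU; rewrite mulrE mulE big1 // => S _; rewrite big1 // => T _.
case hP: (P S T U); last by rewrite mul0r.
case: (eqVneq (odd #|S|) p) => hS; last by rewrite ha // mulr0 mul0r mulr0.
case: (eqVneq (odd #|T|) q) => hT; last by rewrite hb // !mulr0.
by move: hU; rewrite (P_card hP) oddD hS hT eqxx.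
Qed.

Lemma hom_comm p q a b : hom p a -> hom q b -> b * a = (-1) ^+ (p && q) * (a * b) :> E.
Proof.
move=> ha hb; apply/ffunP => U.
have -> : ((-1) ^+ (p && q) * (a * b) : E) U = (-1) ^+ (p && q) * (a * b) U.
  by case: (p && q); rewrite ?expr0 ?expr1 ?mulN1r ?mul1r // ffunE.
rewrite !mulrE !mulE exchange_big mulr_sumr; apply: eq_bigr => S _.
rewrite mulr_sumr; apply: eq_bigr => T _.
have -> : P T S U = P S T U by rewrite /P setIC setUC.
case hP: (P S T U); last by rewrite !mul0r mulr0.
case: (eqVneq (odd #|S|) p) => hS; last by rewrite ha // !(mulr0, mul0r).
case: (eqVneq (odd #|T|) q) => hT; last by rewrite hb // !(mulr0, mul0r).
have : ext_sign S T * ext_sign T S = (-1) ^+ (p && q).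
  by rewrite sign_sym ?hS ?hT //; case/andP: hP.
move=> e; rewrite -e.
have s2 : ext_sign S T * ext_sign S T = 1.
  by rewrite signE -signr_odd; case: (odd _); rewrite ?expr0 ?expr1 ?mulr1 ?mulrNN ?mulr1.
rewrite /= !mul1r.
transitivity (ext_sign S T * ext_sign S T * (ext_sign T S * b T * a S)); last by ring.
by rewrite s2 mul1r.
Qed.

Lemma hom_gen i j : hom true (ext_gen i j).
Proof. by move=> S hS; rewrite ffunE; case: eqP => // e; move: hS; rewrite e cards1. Qed.

Lemma hom_one : hom false (1 : E).
Proof. by move=> S hS; rewrite ffunE; case: eqP => // e; move: hS; rewrite e cards0. Qed.

End Grade.

Definition evenp N : {pred ext N} :=
  fun a => [forall S : {set idx N}, odd #|S| ==> (a S == 0)].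

Arguments evenp : clear implicits.

Lemma evenpP N (a : ext N) : reflect (hom false a) (a \in evenp N).
Proof.
apply: (iffP forallP) => h S.
  by move=> hS; apply/eqP; move: (h S) hS; case: (odd #|S|).
by apply/implyP => hS; apply/eqP; apply: h; rewrite hS.
Qed.

Fact evenp_closed N : subring_closed (evenp N).
Proof.
split.
- by apply/evenpP; exact: hom_one.
- move=> a b /evenpP ha /evenpP hb; apply/evenpP; apply: homD => //; exact: homN.
- by move=> a b /evenpP ha /evenpP hb; apply/evenpP; exact: (hom_mul ha hb).
Qed.

HB.instance Definition _ N := GRing.isSubringClosed.Build (ext N) (evenp N) (evenp_closed N).

Record Ev N := MkEv { evval :> ext N; evP : evval \in evenp N }.
HB.instance Definition _ N := [isSub for (@evval N)].
HB.instance Definition _ N := [Choice of Ev N by <:].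
HB.instance Definition _ N := [SubChoice_isSubNzRing of Ev N by <:].

Lemma evC N : commutative (@GRing.mul (Ev N)).
Proof.
move=> x y; apply: val_inj => /=.
by rewrite (hom_comm (elimT (evenpP _) (evP x)) (elimT (evenpP _) (evP y))) /= expr0 mul1r.
Qed.
HB.instance Definition _ N := GRing.PzSemiRing_hasCommutativeMul.Build (Ev N) (@evC N).


Lemma mxmulE N m (A B : 'M[ext N]_m) : ext_mxmul A B = A *m B.
Proof. by apply/matrixP => i j; rewrite !mxE. Qed.

Lemma mx1E N m : ext_mx1 N m = 1%:M.
Proof. by apply/matrixP => i j; rewrite !mxE; case: eqP. Qed.

Lemma powE N m (A : 'M[ext N]_m.+1) k : ext_mxpow A k = A ^+ k.
Proof.
elim: k => [|k IH]; first by rewrite /ext_mxpow /= mx1E.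
by rewrite /ext_mxpow iterS -/(ext_mxpow A k) IH mxmulE exprS.
Qed.

Section Main.
Variable m : nat.
Local Notation N := m.+1.
Local Notation X := (Xgen N).

Lemma hX k i j : hom (odd k) ((X ^+ k) i j).
Proof.
elim: k i j => [|k IH] i j.
  rewrite expr0 !mxE; case: eqP => _; [exact: hom_one | exact: hom0].
rewrite exprS mxE; apply: hom_sum => l.
have -> : odd k.+1 = true (+) odd k by [].
by apply: hom_mul => //; rewrite mxE; exact: hom_gen.
Qed.

Lemma twice0 (t : ext N) : t + t = 0 -> t = 0.
Proof.
move=> /ffunP h; apply/ffunP => S; move: (h S); rewrite !ffunE => e.
have : (t S : Rdefinitions.R[i]) *+ 2 == 0 by rewrite mulr2n e.
by rewrite mulrn_eq0 /= => /eqP.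
Qed.

Lemma trX k : (0 < k)%N -> \tr (X ^+ (2 * k)) = 0.
Proof.
move=> k0; have -> : (2 * k = (2 * k).-1.+1)%N by lia.
set j := (2 * k).-1.
have oj : odd j.
  rewrite /j; case: (k) k0 => // k1 _.
  have -> : ((2 * k1.+1).-1 = (2 * k1).+1)%N by lia.
  by rewrite /= oddM.
apply: twice0.
have e1 : \tr (X ^+ j.+1) = \sum_i \sum_l X i l * (X ^+ j) l i.
  by rewrite exprS /mxtrace; apply: eq_bigr => i _; rewrite mxE.
have e2 : \tr (X ^+ j.+1) = \sum_l \sum_i (X ^+ j) l i * X i l.
  by rewrite exprSr /mxtrace; apply: eq_bigr => i _; rewrite mxE.
rewrite {1}e1 {1}e2 exchange_big -big_split /=; apply: big1 => l _.
rewrite -big_split /=; apply: big1 => i _.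
have hZ : hom true ((X ^+ j) l i) by rewrite -oj; exact: hX.
have hXX : hom true (X i l) by rewrite mxE; exact: hom_gen.
by rewrite (hom_comm hZ hXX) /= expr1 mulN1r addNr.
Qed.

End Main.

Section Final.
Variable m : nat.
Local Notation N := m.+1.
Local Notation X := (Xgen N).

Lemma hYe (i j : 'I_N) : (X ^+ 2) i j \in evenp N.
Proof. by apply/evenpP; exact: (@hX m 2 i j). Qed.

Definition Yv : 'M[Ev N]_N := \matrix_(i, j) MkEv (hYe i j).

Lemma Ypow k : map_mx val (Yv ^+ k) = X ^+ (2 * k).
Proof.
rewrite rmorphXn exprM; congr (_ ^+ _).
by apply/matrixP => i j; rewrite !mxE.
Qed.

Lemma trval (B : 'M[Ev N]_N) : val (\tr B) = \tr (map_mx val B).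
Proof. by rewrite /mxtrace raddf_sum; apply: eq_bigr => i _; rewrite mxE. Qed.

Lemma main_pos : X ^+ (2 * N) = 0.
Proof.
rewrite -Ypow (newton_nil (A := Yv)).
- by apply/matrixP => i j; rewrite !mxE.
- move=> k k0; apply: val_inj; rewrite trval Ypow trX //.
- move=> k c k0 /(congr1 val); rewrite raddfMn /= => /ffunP h.
  apply: val_inj; apply/ffunP => S; move: (h S); rewrite ffunMnE !ffunE => e.
  have : (val c S : Rdefinitions.R[i]) *+ k == 0 by rewrite e.
  by rewrite mulrn_eq0 eqn0Ngt k0 /= => /eqP.
Qed.
End Final.

Theorem corollary2p5 (n : nat) : ext_mxpow (Xgen n) (2 * n) = 0.
Proof.
case: n => [|m].
  by apply/matrixP => i; case: i.
by rewrite powE main_pos.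
Qed.
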